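(* Let $E$ be a regular $(a,b)$-module and let $0=F_0\subsetneq F_1\subsetneq\dots\subsetneq F_n=E$ be a Jordan–Hölder composition series with $F_i/F_{i-1}\simeq E_{\lambda_i}$ for all $i$. Suppose there is $j$ with $\lambda_{j+1}\not\equiv\lambda_j\pmod{\mathbb{Z}}$. Then there is another Jordan–Hölder composition series of $E$ which differs from the given one only in the $j$-th term, replaced by some $F'_j$, such that $F'_j/F_{j-1}\simeq E_{\lambda'_j}$ and $F_{j+1}/F'_j\simeq E_{\lambda'_{j+1}}$ with $\lambda_j\equiv\lambda'_{j+1}\pmod{\mathbb{Z}}$ and $\lambda_{j+1}\equiv\lambda'_j\pmod{\mathbb{Z}}$.
   Context: An $(a,b)$-module is a free module $E$ of finite rank over $\mathbb{C}[[b]]$ with a $\mathbb{C}$-linear endomorphism $a$ satisfying $ab-ba=b^2$. A sub-$(a,b)$-module is a sub-$\mathbb{C}[[b]]$-module stable by $a$; it is normal if the quotient is free over $\mathbb{C}[[b]]$. $E$ is regular if it embeds into an $(a,b)$-module $E'$ with $aE'\subset bE'$. $E_\lambda$ is the rank-one $(a,b)$-module generated by $e_\lambda$ with $ae_\lambda=\lambda be_\lambda$. A Jordan–Hölder composition series of a regular $E$ of rank $n$ is a chain $0=F_0\subsetneq\dots\subsetneq F_n=E$ of normal sub-$(a,b)$-modules of $E$ with $F_i$ of rank $i$; the quotients $F_i/F_{i-1}$ are then isomorphic to some $E_{\lambda_i}$. *)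

(* Defs.v *)
From mathcomp Require Import all_boot all_algebra.
From mathcomp Require Import complex Rstruct.
Set Implicit Arguments. Unset Strict Implicit. Unset Printing Implicit Defensive.
Import GRing.Theory.
Local Open Scope ring_scope.

Definition C : numClosedFieldType := complex Rdefinitions.R.

(* Formal power series in b over C: coefficient sequences. *)
Definition ps := nat -> C.

(* The free C[[b]]-module of rank n, C[[b]]^n, written as power series in b
   with coefficients in C^n: x = \sum_k x k b^k.  Every free C[[b]]-module
   of rank n is isomorphic to this one. *)
Definition abE (n : nat) := nat -> 'rV[C]_n.

Definition ezero n : abE n := fun _ => 0.
Definition eadd n (x y : abE n) : abE n := fun k => x k + y k.
Definition cmul n (c : C) (x : abE n) : abE n := fun k => c *: x k.
Definition bmul n (x : abE n) : abE n :=
  fun k => if k is k'.+1 then x k' else 0.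
Definition smul n (s : ps) (x : abE n) : abE n :=
  fun k => \sum_(i < k.+1) s i *: x (k - i)%N.
Definition lincomb n k (s : 'I_k -> ps) (f : 'I_k -> abE n) : abE n :=
  fun l => \sum_(i < k) smul (s i) (f i) l.

Definition is_ab_structure n (a : abE n -> abE n) : Prop :=
  [/\ forall x y, a (eadd x y) = eadd (a x) (a y),
      forall c x, a (cmul c x) = cmul c (a x) &
      forall x, a (bmul x) = eadd (bmul (a x)) (bmul (bmul x))].

Definition ablinear n m (phi : abE n -> abE m) : Prop :=
  (forall x y, phi (eadd x y) = eadd (phi x) (phi y)) /\
  (forall s x, phi (smul s x) = smul s (phi x)).

Definition is_regular n (a : abE n -> abE n) : Prop :=
  exists m (a' : abE m -> abE m) (phi : abE n -> abE m),
    [/\ is_ab_structure a', ablinear phi, injective phi,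
        (forall x, phi (a x) = a' (phi x)) &
        (forall y, exists z, a' y = bmul z)].

Definition is_sub_ab n (a : abE n -> abE n) (F : abE n -> Prop) : Prop :=
  [/\ F (ezero n),
      forall x y, F x -> F y -> F (eadd x y),
      forall s x, F x -> F (smul s x) &
      forall x, F x -> F (a x)].

Definition free_rank n (F : abE n -> Prop) (k : nat) : Prop :=
  exists f : 'I_k -> abE n,
    [/\ forall i, F (f i),
        forall x, F x -> exists s, x = lincomb s f &
        forall s, lincomb s f = ezero n -> forall i l, s i l = 0].

(* For G a submodule of F, the quotient F/G is free over C[[b]]:
   some elements of F have classes forming a C[[b]]-basis of F/G. *)
Definition quotient_free n (F G : abE n -> Prop) : Prop :=
  exists k (f : 'I_k -> abE n),
    [/\ forall i, F (f i),
        forall x, F x -> exists s y, G y /\ x = eadd (lincomb s f) y &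
        forall s, G (lincomb s f) -> forall i l, s i l = 0].

Definition is_normal_sub n (a : abE n -> abE n) (F : abE n -> Prop) : Prop :=
  is_sub_ab a F /\ quotient_free (fun _ => True) F.

(* F/G is isomorphic, as an (a,b)-module, to E_lam: the isomorphism sends
   e_lam to the class of some e in F; it is C[[b]]-linear bijective
   (the class of e freely generates F/G) and commutes with a
   (a [e] = lam b [e] in F/G). *)
Definition quot_iso_E n (a : abE n -> abE n) (G F : abE n -> Prop) (lam : C)
  : Prop :=
  exists e, [/\ F e,
    forall x, F x -> exists s y, G y /\ x = eadd (smul s e) y,
    forall s, G (smul s e) -> forall l, s l = 0 &
    G (eadd (a e) (cmul (- lam) (bmul e)))].

Definition is_JH n (a : abE n -> abE n) (F : nat -> abE n -> Prop) : Prop :=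
  [/\ forall x, F 0%N x <-> x = ezero n,
      forall x, F n x,
      forall i, (i <= n)%N -> is_normal_sub a (F i) /\ free_rank (F i) i &
      forall i, (0 < i <= n)%N ->
        (forall x, F i.-1 x -> F i x) /\ exists x, F i x /\ ~ F i.-1 x].

Definition congZ (x y : C) : Prop := exists z : int, x - y = z%:~R.

(* Main.v *)
Require Import Defs.
From HB Require Import structures.
From mathcomp Require Import all_boot all_algebra.
From mathcomp Require Import boolp.
From mathcomp Require Import ring.
Set Implicit Arguments. Unset Strict Implicit. Unset Printing Implicit Defensive.
Import GRing.Theory.
Local Open Scope ring_scope.


HB.instance Definition _ := Choice.copy ps (nat -> C).

Definition padd (s t : ps) : ps := fun k => s k + t k.
Definition popp (s : ps) : ps := fun k => - s k.
Definition pzero : ps := fun _ => 0.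

Lemma paddA : associative padd.
Proof. by move=> x y z; apply: funext => k; rewrite /padd addrA. Qed.
Lemma paddC : commutative padd.
Proof. by move=> x y; apply: funext => k; rewrite /padd addrC. Qed.
Lemma padd0 : left_id pzero padd.
Proof. by move=> x; apply: funext => k; rewrite /padd /pzero add0r. Qed.
Lemma paddN : left_inverse pzero popp padd.
Proof. by move=> x; apply: funext => k; rewrite /padd /pzero /popp addNr. Qed.
HB.instance Definition _ := GRing.isZmodule.Build ps paddA paddC padd0 paddN.

Lemma ps_addE (s t : ps) k : (s + t) k = s k + t k. Proof. by []. Qed.
Lemma ps_oppE (s : ps) k : (- s) k = - s k. Proof. by []. Qed.
Lemma ps_zeroE k : (0 : ps) k = 0. Proof. by []. Qed.

Definition pmul (s t : ps) : ps := fun k => \sum_(i < k.+1) s i * t (k - i)%N.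
Definition pone : ps := fun k => if k is 0 then 1 else 0.

Definition tr (N : nat) (s : ps) : {poly C} := \poly_(i < N) s i.

Lemma pmul_tr N s t k : (k < N)%N -> pmul s t k = (tr N s * tr N t)`_k.
Proof.
move=> kN; rewrite coefM /pmul; apply: eq_bigr => i _.
rewrite /tr !coef_poly.
have iN : (i < N)%N by apply: leq_ltn_trans kN; rewrite -ltnS.
have kiN : (k - i < N)%N by apply: leq_ltn_trans kN; exact: leq_subr.
by rewrite iN kiN.
Qed.

Lemma coef_tr N s k : (k < N)%N -> (tr N s)`_k = s k.
Proof. by move=> kN; rewrite /tr coef_poly kN. Qed.

Lemma coefM_agree N (p q r : {poly C}) k :
  (forall i, (i < N)%N -> p`_i = q`_i) -> (k < N)%N -> (p * r)`_k = (q * r)`_k.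
Proof.
move=> H kN; rewrite !coefM; apply: eq_bigr => i _; rewrite H //.
by apply: leq_ltn_trans kN; rewrite -ltnS.
Qed.

Lemma tr_pmul N s t k : (k < N)%N -> (tr N (pmul s t))`_k = (tr N s * tr N t)`_k.
Proof. by move=> kN; rewrite coef_tr // (pmul_tr _ _ kN). Qed.

Lemma pmulA : associative pmul.
Proof.
move=> x y z; apply: funext => k; set N := k.+1.
rewrite (@pmul_tr N _ _ k (ltnSn k)) (@pmul_tr N _ _ k (ltnSn k)).
have h1 := @coefM_agree N (tr N (pmul x y)) (tr N x * tr N y) (tr N z) k.
have h2 := @coefM_agree N (tr N (pmul y z)) (tr N y * tr N z) (tr N x) k.
rewrite h1; [|by move=> i iN; exact: tr_pmul|by []].
rewrite mulrC h2; [|by move=> i iN; exact: tr_pmul|by []].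
by rewrite mulrC mulrA.
Qed.

Lemma pmulC : commutative pmul.
Proof.
move=> x y; apply: funext => k.
by rewrite (@pmul_tr k.+1 _ _ k (ltnSn k)) (@pmul_tr k.+1 _ _ k (ltnSn k)) mulrC.
Qed.

Lemma pmul1 : left_id pone pmul.
Proof.
move=> x; apply: funext => k; rewrite /pmul big_ord_recl subn0.
rewrite big1 ?addr0; first by rewrite /pone mul1r.
by move=> i _; rewrite /pone /= mul0r.
Qed.

Lemma pmulDl : left_distributive pmul padd.
Proof.
move=> x y z; apply: funext => k; rewrite /pmul /padd -big_split /=.
by apply: eq_bigr => i _; rewrite mulrDl.
Qed.

Lemma pone_neq0 : pone != 0.
Proof.
apply/negP => /eqP H; have := congr1 (fun f : ps => f 0%N) H.
rewrite /pone => /eqP; rewrite oner_eq0 //.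
Qed.

HB.instance Definition _ := GRing.Zmodule_isComNzRing.Build ps pmulA pmulC pmul1 pmulDl pone_neq0.

Lemma ps_mulE (s t : ps) k : (s * t) k = \sum_(i < k.+1) s i * t (k - i)%N.
Proof. by []. Qed.
Lemma ps_oneE k : (1 : ps) k = if k is 0 then 1 else 0.
Proof. by []. Qed.


Section M.
Variable n : nat.
Local Notation E := (abE n).

HB.instance Definition _ := Choice.copy E (nat -> 'rV[C]_n).

Definition eopp (x : E) : E := fun k => - x k.
Lemma eaddA : associative (@eadd n).
Proof. by move=> x y z; apply: funext => k; rewrite /eadd addrA. Qed.
Lemma eaddC : commutative (@eadd n).
Proof. by move=> x y; apply: funext => k; rewrite /eadd addrC. Qed.
Lemma eadd0 : left_id (ezero n) (@eadd n).
Proof. by move=> x; apply: funext => k; rewrite /eadd /ezero add0r. Qed.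
Lemma eaddN : left_inverse (ezero n) eopp (@eadd n).
Proof. by move=> x; apply: funext => k; rewrite /eadd /ezero /eopp addNr. Qed.
HB.instance Definition _ := GRing.isZmodule.Build E eaddA eaddC eadd0 eaddN.

Definition crd (x : E) (c : 'I_n) : ps := fun k => x k 0 c.

Lemma crd_ext (x y : E) : (forall c, crd x c = crd y c) -> x = y.
Proof.
move=> H; apply: funext => k; apply/rowP => c.
by have := congr1 (fun f : ps => f k) (H c).
Qed.

Lemma crd_smul s x c : crd (smul s x) c = s * crd x c.
Proof.
apply: funext => k; rewrite /crd /smul summxE ps_mulE.
by apply: eq_bigr => i _; rewrite mxE.
Qed.

Lemma crd_add (x y : E) c : crd (x + y) c = crd x c + crd y c.
Proof. by apply: funext => k; rewrite /crd ps_addE /= /eadd mxE. Qed.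

Lemma smulA s t (x : E) : smul s (smul t x) = smul (s * t) x.
Proof. by apply: crd_ext => c; rewrite !crd_smul mulrA. Qed.
Lemma smul1 : left_id 1 (@smul n).
Proof. by move=> x; apply: crd_ext => c; rewrite !crd_smul mul1r. Qed.
Lemma smulDr s : {morph smul s : x y / x + y}.
Proof. by move=> x y; apply: crd_ext => c; rewrite !(crd_add, crd_smul) mulrDr. Qed.
Lemma smulDl (x : E) : {morph (@smul n)^~ x : s t / s + t}.
Proof. by move=> s t; apply: crd_ext => c; rewrite !(crd_add, crd_smul) mulrDl. Qed.

HB.instance Definition _ := GRing.Zmodule_isLmodule.Build ps E smulA smul1 smulDr smulDl.

End M.


Definition pC (c : C) : ps := fun k => if k is 0 then c else 0.
Definition pX : ps := fun k => if k is 1 then 1 else 0.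
Definition bd (s : ps) : ps := fun k => k%:R * s k.

Lemma pC_mulE c u k : (pC c * u) k = c * u k.
Proof.
rewrite ps_mulE big_ord_recl subn0 big1 ?addr0 //.
by move=> i _; rewrite /pC /= mul0r.
Qed.

Lemma pX_mulE u k : (pX * u) k = if k is k'.+1 then u k' else 0.
Proof.
rewrite ps_mulE; case: k => [|k].
  by rewrite big_ord_recl big_ord0 addr0 /pX mul0r.
rewrite big_ord_recl big_ord_recl big1.
  by rewrite /pX /= mul0r add0r mul1r addr0 subn1.
by move=> i _; rewrite /pX /= mul0r.
Qed.

Lemma pXn_E i k : (pX ^+ i) k = (k == i)%:R.
Proof.
elim: i k => [|i IH] k.
  by rewrite expr0 ps_oneE; case: k.
rewrite exprS pX_mulE; case: k => [|k] //.
Qed.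

Lemma ps_sumE m (G : 'I_m -> ps) k : (\sum_(i < m) G i) k = \sum_(i < m) G i k.
Proof.
by apply: (big_morph (fun f : ps => f k)).
Qed.

Lemma bdD s t : bd (s + t) = bd s + bd t.
Proof. by apply: funext => k; rewrite /bd !ps_addE mulrDr. Qed.

Lemma natr_mulE m u k : ((m%:R : ps) * u) k = m%:R * u k.
Proof.
elim: m => [|m IH]; first by rewrite !mul0r.
by rewrite !mulrSr mulrDl ps_addE IH mul1r mulrDl mul1r.
Qed.

Lemma bd_mono c i : bd (pC c * pX ^+ i) = i%:R * (pC c * pX ^+ i).
Proof.
apply: funext => k; rewrite /bd natr_mulE !pC_mulE pXn_E.
by case: eqP => [->|_]; rewrite ?mulr0.
Qed.


Section Sa.
Variable n : nat.
Local Notation E := (abE n).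

Lemma E_addE (x y : E) k : (x + y) k = x k + y k. Proof. by []. Qed.
Lemma E_oppE (x : E) k : (- x) k = - x k. Proof. by []. Qed.
Lemma E_zeroE k : (0 : E) k = 0. Proof. by []. Qed.
Lemma E_scaleE s (x : E) : s *: x = smul s x. Proof. by []. Qed.

Lemma cmulE c (x : E) : cmul c x = pC c *: x.
Proof. by apply: crd_ext => i; rewrite crd_smul; apply: funext => k; rewrite pC_mulE /crd /cmul mxE. Qed.

Lemma bmulE (x : E) : bmul x = pX *: x.
Proof.
apply: crd_ext => i; rewrite crd_smul; apply: funext => k; rewrite pX_mulE /crd /bmul.
by case: k => [|k]; rewrite ?mxE.
Qed.

Lemma pCN1 : pC (-1) = -1.
Proof. by apply: funext => -[|k]; rewrite /pC ps_oppE ps_oneE ?oppr0. Qed.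

Variable a : E -> E.
Hypothesis Hab : is_ab_structure a.

Lemma aD x y : a (x + y) = a x + a y.
Proof. by case: Hab => H _ _; exact: H. Qed.
Lemma aC c x : a (pC c *: x) = pC c *: a x.
Proof. by case: Hab => _ H _; rewrite -!cmulE H. Qed.
Lemma aX x : a (pX *: x) = pX *: a x + (pX * pX) *: x.
Proof. by case: Hab => _ _ H; rewrite -!bmulE H !bmulE -scalerA. Qed.
Lemma aN x : a (- x) = - a x.
Proof. by rewrite -scaleN1r -pCN1 aC pCN1 scaleN1r. Qed.
Lemma a0 : a 0 = 0.
Proof. have := aD 0 0; rewrite addr0 => h; by apply: (addrI (a 0)); rewrite addr0 -h. Qed.
Lemma aB x y : a (x - y) = a x - a y.
Proof. by rewrite aD aN. Qed.

Lemma a_vanish N (z : E) : (forall l, (l < N)%N -> z l = 0) ->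
  forall l, (l < N)%N -> a z l = 0.
Proof.
elim: N z => [|N IH] z Hz l; first by [].
pose z' : E := fun l => z l.+1.
have ez : z = bmul z'.
  apply: (@funext nat 'rV[C]_n) => k; case: k => [|k]; rewrite /bmul /z'; [exact: Hz|by []].
case: Hab => _ _ Hb.
rewrite ez Hb; case: l => [|l] lN; first by rewrite /eadd /bmul addr0.
have Hz' : forall m, (m < N)%N -> z' m = 0 by move=> m mN; rewrite /z' Hz.
rewrite /eadd /bmul (IH z' Hz' l lN) add0r.
by case: l lN => [|l] lN //; rewrite Hz' // ltnW.
Qed.

Lemma a_agree N (x y : E) : (forall l, (l < N)%N -> x l = y l) ->
  forall l, (l < N)%N -> a x l = a y l.
Proof.
move=> H l lN; apply/eqP; rewrite -subr_eq0; apply/eqP.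
rewrite -E_oppE -E_addE -aB; apply: (a_vanish (N := N)) => // m mN.
by rewrite E_addE E_oppE H // subrr.
Qed.


Lemma aXn i x : a (pX ^+ i *: x) = pX ^+ i *: a x + (i%:R * pX ^+ i.+1) *: x.
Proof.
elim: i => [|i IH]; first by rewrite !expr0 !scale1r mul0r scale0r addr0.
rewrite exprS -scalerA aX IH scalerDr !scalerA -addrA -scalerDl.
congr (_ + _); congr (_ *: _).
rewrite !exprS -(addn1 i) natrD. ring.
Qed.

Lemma amono c i x : a ((pC c * pX ^+ i) *: x) =
  (pC c * pX ^+ i) *: a x + (pX * bd (pC c * pX ^+ i)) *: x.
Proof.
rewrite -scalerA aC aXn scalerDr !scalerA bd_mono; congr (_ + _ *: _).
rewrite exprS. ring.
Qed.

Fixpoint trunc (s : ps) K : ps :=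
  if K is K'.+1 then trunc s K' + pC (s K) * pX ^+ K else pC (s 0%N) * pX ^+ 0.

Lemma atrunc s K x : a (trunc s K *: x) = trunc s K *: a x + (pX * bd (trunc s K)) *: x.
Proof.
elim: K => [|K IH] /=; first exact: amono.
rewrite !scalerDl aD IH amono bdD mulrDr scalerDl.
by rewrite -!addrA; congr (_ + _); rewrite addrCA.
Qed.


Lemma trunc_coefE s K l : trunc s K l = if (l <= K)%N then s l else 0.
Proof.
elim: K => [|K IH] /=.
  by rewrite pC_mulE expr0 ps_oneE; case: l => [|l]; rewrite ?mulr1 ?mulr0.
rewrite ps_addE pC_mulE pXn_E IH.
case: (ltngtP l K.+1) => [lK|lK|->].
- by rewrite -ltnS lK mulr0 addr0.
- by rewrite leqNgt (ltn_trans _ lK) // mulr0 addr0.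
- by rewrite ltnn mulr1 add0r.
Qed.

Lemma trunc_coef s K l : (l <= K)%N -> trunc s K l = s l.
Proof. by move=> lK; rewrite trunc_coefE lK. Qed.

Lemma agree_mul K (s t u : ps) : (forall i, (i <= K)%N -> s i = t i) ->
  forall l, (l <= K)%N -> (s * u) l = (t * u) l.
Proof.
move=> H l lK; rewrite !ps_mulE; apply: eq_bigr => i _; rewrite H //.
by apply: leq_trans lK; rewrite -ltnS.
Qed.

Lemma agree_smul K (s t : ps) (x : E) : (forall i, (i <= K)%N -> s i = t i) ->
  forall l, (l <= K)%N -> (s *: x) l = (t *: x) l.
Proof.
move=> H l lK; rewrite !E_scaleE /smul; apply: eq_bigr => i _; rewrite H //.
by apply: leq_trans lK; rewrite -ltnS.
Qed.

Lemma a_smul s x : a (s *: x) = s *: a x + (pX * bd s) *: x.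
Proof.
apply: (@funext nat 'rV[C]_n) => k.
have Hst : forall i, (i <= k)%N -> trunc s k i = s i by move=> i ik; rewrite trunc_coef.
have Hx : forall l, (l < k.+1)%N -> (s *: x) l = (trunc s k *: x) l.
  by move=> l lk; rewrite (@agree_smul k s (trunc s k)) // => i ik; rewrite Hst.
rewrite (a_agree Hx (ltnSn k)).
rewrite atrunc !E_addE (@agree_smul k (trunc s k) s) //.
congr (_ + _); apply: (@agree_smul k) => // i ik.
rewrite !pX_mulE; case: i ik => [|i] ik //.
by rewrite /bd Hst // ltnW.
Qed.

End Sa.


Section U.
Variable n : nat.
Local Notation E := (abE n).

Lemma E_sumE m (G : 'I_m -> E) k : (\sum_(i < m) G i) k = \sum_(i < m) G i k.
Proof. by apply: (big_morph (fun f : E => f k)). Qed.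

Lemma lincombE k (s : 'I_k -> ps) (f : 'I_k -> E) : lincomb s f = \sum_(i < k) s i *: f i.
Proof. by apply: (@funext nat 'rV[C]_n) => l; rewrite E_sumE. Qed.

Lemma ps0P (s : ps) : (forall l, s l = 0) <-> s = 0.
Proof. by split => [H|-> l //]; apply: funext => l; rewrite H. Qed.

Definition ext T k (f : 'I_k -> T) (z : T) : 'I_k.+1 -> T :=
  fun i => match unlift ord_max i with Some i' => f i' | None => z end.

Lemma ext_lift T k (f : 'I_k -> T) z i : ext f z (lift ord_max i) = f i.
Proof. by rewrite /ext liftK. Qed.
Lemma ext_max T k (f : 'I_k -> T) z : ext f z ord_max = z.
Proof. by rewrite /ext unlift_none. Qed.

Lemma sum_ext k (H : 'I_k.+1 -> E) :
  \sum_(i < k.+1) H i = \sum_(i < k) H (lift ord_max i) + H ord_max.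
Proof.
rewrite big_ord_recr; congr (_ + _); apply: eq_bigr => i _.
by congr (H _); apply: val_inj; rewrite /= /bump leqNgt ltn_ord.
Qed.

Variable a : E -> E.

Section Sub.
Variable P : E -> Prop.
Hypothesis HP : is_sub_ab a P.
Lemma sub0 : P 0. Proof. by case: HP. Qed.
Lemma subD x y : P x -> P y -> P (x + y). Proof. by case: HP => _ H _ _; exact: H. Qed.
Lemma subZ s x : P x -> P (s *: x). Proof. by case: HP => _ _ H _; exact: H. Qed.
Lemma subA x : P x -> P (a x). Proof. by case: HP => _ _ _ H; exact: H. Qed.
Lemma subN x : P x -> P (- x). Proof. by move=> Px; rewrite -scaleN1r; exact: subZ. Qed.
Lemma subB x y : P x -> P y -> P (x - y). Proof. by move=> Px Py; apply: subD => //; exact: subN. Qed.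
End Sub.

End U.

Module EeM.

Lemma eaddE n (x y : abE n) : eadd x y = x + y. Proof. by []. Qed.
Lemma smulE n s (x : abE n) : smul s x = s *: x. Proof. by []. Qed.
Lemma ezeroE n : ezero n = 0. Proof. by []. Qed.

Lemma pCN c : pC (- c) = - pC c.
Proof. by apply: funext => -[|k]; rewrite /pC ps_oppE ?oppr0. Qed.

Lemma eigE n (a : abE n -> abE n) e l :
  eadd (a e) (cmul (- l) (bmul e)) = a e - (pC l * pX) *: e.
Proof. by rewrite cmulE bmulE scalerA pCN mulNr scaleNr. Qed.

Section Assemble.
Variables (n : nat) (a : abE n -> abE n).
Hypothesis Hab : is_ab_structure a.
Variable F : nat -> abE n -> Prop.
Hypothesis HJH : is_JH a F.
Variable m : nat.
Hypothesis Hmn : (m.+1 < n)%N.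
Variables (p q : abE n) (mu nu : C).
Hypotheses (Hp : F m.+2 p) (Hq : F m.+2 q).
Hypothesis Hi : F m (a p - (pC mu * pX) *: p).
Hypothesis Hii : exists r g, F m g /\ a q - (pC nu * pX) *: q = r *: p + g.
Hypothesis Hiii : forall y, F m.+2 y -> exists r t g, F m g /\ y = r *: p + t *: q + g.
Hypothesis Hiv : forall r t, F m (r *: p + t *: q) -> r = 0 /\ t = 0.
Hypothesis Hv : ~ F m.+1 p.

Definition F' : abE n -> Prop := fun x => exists r g, F m g /\ x = r *: p + g.

Lemma Hsub i : (i <= n)%N -> is_sub_ab a (F i).
Proof. by case: HJH => _ _ H _ iN; case: (H i iN) => -[]. Qed.

Lemma Fincl i x : (0 < i <= n)%N -> F i.-1 x -> F i x.
Proof. by case: HJH => _ _ _ H iN; case: (H i iN) => + _; apply. Qed.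

Lemma SG : is_sub_ab a (F m).
Proof. by apply: Hsub; apply: leq_trans (ltnW Hmn). Qed.
Lemma S2 : is_sub_ab a (F m.+2).
Proof. exact: Hsub. Qed.
Lemma G2 x : F m x -> F m.+2 x.
Proof.
move=> Gx; apply: (@Fincl m.+2) => //=; apply: (@Fincl m.+1) => //=.
by rewrite (ltnW Hmn).
Qed.

Lemma F'_sub : is_sub_ab a F'.
Proof.
have SG := SG.
rewrite /F'; split.
- exists (0 : ps), (0 : abE n). split; first exact: (sub0 SG). by rewrite ezeroE scale0r addr0.
- move=> x y [r [g [Gg ->]]] [r' [g' [Gg' ->]]].
  exists (r + r'), (g + g'). split; first exact: (subD SG).
  rewrite eaddE scalerDl -!addrA. congr (_ + _). by rewrite addrCA.
- move=> s x [r [g [Gg ->]]].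
  exists (s * r), (s *: g). split; first exact: (subZ SG).
  by rewrite smulE scalerDr scalerA.
- move=> x [r [g [Gg ->]]].
  set g0 := a p - (pC mu * pX) *: p.
  have ap : a p = (pC mu * pX) *: p + g0 by rewrite /g0 addrC subrK.
  exists (r * (pC mu * pX) + pX * bd r), (r *: g0 + a g). split.
    by apply: (subD SG); [exact: (subZ SG)|exact: (subA SG)].
  rewrite (aD Hab) (a_smul Hab) ap scalerDr scalerA scalerDl.
  by rewrite -!addrA; congr (_ + _); rewrite addrCA.
Qed.


Lemma qf2 : quotient_free (fun _ => True) (F m.+2).
Proof. by case: HJH => _ _ H _; case: (H m.+2 Hmn) => -[_ +] _. Qed.

Lemma fr0 : free_rank (F m) m.
Proof. by case: HJH => _ _ H _; case: (H m (ltnW (ltnW Hmn))) => _. Qed.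

Lemma pq_indep_q r t g : F m g -> t *: q = r *: p + g -> t = 0.
Proof.
move=> Gg e; have := Hiv (r := - r) (t := t); case => //.
suff -> : (- r) *: p + t *: q = g by [].
by rewrite e scaleNr addrA addNr add0r.
Qed.

Lemma F'_qf : quotient_free (fun _ => True) F'.
Proof.
have S2 := S2; have SG := SG.
case: qf2 => k [f [_ Hsp Hind]].
exists k.+1, (ext f q). split.
- by [].
- move=> x _; have [s [y [Fy ->]]] := Hsp x I.
  have [r [t [g [Gg ->]]]] := Hiii Fy.
  exists (ext s t), (r *: p + g). split; first by exists r, g.
  rewrite eaddE !lincombE sum_ext !ext_max.
  under [X in _ = X + _ + _]eq_bigr do rewrite !ext_lift.
  rewrite -!addrA; congr (_ + _).
  by rewrite addrCA.
- move=> s' [r [g [Gg Heq]]].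
  rewrite lincombE sum_ext ext_max in Heq.
  set s := fun i => s' (lift ord_max i).
  have Heq' : \sum_(i < k) s i *: f i + s' ord_max *: q = r *: p + g.
    by rewrite -Heq; congr (_ + _); apply: eq_bigr => i _; rewrite ext_lift.
  have Fl : F m.+2 (lincomb s f).
    have -> : lincomb s f = r *: p + g - s' ord_max *: q.
      by rewrite -Heq' lincombE addrK.
    apply: (subB S2); last exact: (subZ S2).
    by apply: (subD S2); [exact: (subZ S2)|exact: G2].
  have s0 := Hind s Fl.
  have sum0 : \sum_(i < k) s i *: f i = 0.
    by apply: big1 => i _; have /ps0P -> := s0 i; rewrite scale0r.
  rewrite sum0 add0r in Heq'.
  have t0 := pq_indep_q Gg Heq'.
  move=> i; case: (unliftP ord_max i) => [i'|] ->.
    exact: s0.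
  by rewrite t0.
Qed.

Lemma F'_fr : free_rank F' m.+1.
Proof.
have SG := SG.
case: fr0 => f0 [Hf0 Hsp0 Hind0].
exists (ext f0 p). split.
- move=> i; case: (unliftP ord_max i) => [i'|] ->; rewrite ?ext_lift ?ext_max.
    by exists 0, (f0 i'); rewrite scale0r add0r.
  by exists 1, 0; split; [exact: (sub0 SG)|rewrite scale1r addr0].
- move=> x [r [g [Gg ->]]]; have [s Hs] := Hsp0 g Gg.
  exists (ext s r); rewrite lincombE sum_ext !ext_max Hs lincombE addrC.
  by congr (_ + _); apply: eq_bigr => i _; rewrite !ext_lift.
- move=> s' H0; rewrite lincombE sum_ext ext_max in H0.
  set s := fun i => s' (lift ord_max i).
  have H0' : \sum_(i < m) s i *: f0 i + s' ord_max *: p = 0.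
    by rewrite -[RHS]H0; congr (_ + _); apply: eq_bigr => i _; rewrite ext_lift.
  have tG : F m (s' ord_max *: p + 0 *: q).
    rewrite scale0r addr0.
    have -> : s' ord_max *: p = - lincomb s f0.
      by rewrite lincombE; apply/eqP; rewrite -addr_eq0 addrC H0'.
    by apply: (subN SG); rewrite lincombE; apply: big_ind => //;
      [exact: (sub0 SG)|exact: (subD SG)|move=> i _; apply: (subZ SG)].
  have [t0 _] := Hiv tG.
  rewrite t0 scale0r addr0 in H0'.
  have s0 := Hind0 s (etrans (lincombE _ _) H0').
  move=> i; case: (unliftP ord_max i) => [i'|] ->.
    exact: s0.
  by rewrite t0.
Qed.


Lemma one_neq0_ps : (1 : ps) <> 0.
Proof. by move=> /eqP; rewrite oner_eq0. Qed.

Lemma assemble : exists F'j : abE n -> Prop,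
  [/\ is_JH a (fun i => if i == m.+1 then F'j else F i),
      exists x, ~ (F'j x <-> F m.+1 x),
      quot_iso_E a (F m) F'j mu &
      quot_iso_E a F'j (F m.+2) nu].
Proof.
have SG := SG; have S2 := S2.
have F'p : F' p.
  by exists 1, 0; split; [exact: (sub0 SG)|rewrite scale1r addr0].
have nGp : ~ F m p.
  move=> Gp; have [] := Hiv (r := 1) (t := 0).
    by rewrite scale1r scale0r addr0.
  by move=> /one_neq0_ps.
have nF'q : ~ F' q.
  move=> [r [g [Gg e]]]; apply: one_neq0_ps; apply: (pq_indep_q (r := r) Gg).
  by rewrite scale1r.
exists F'; split.
- case: HJH => H0 Hn Hnorm Hchain; split.
  + by move=> x; exact: H0.
  + by move=> x; rewrite (gtn_eqF Hmn); exact: Hn.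
  + move=> i iN; case: eqP => [->|_]; last exact: Hnorm.
    by split; [split; [exact: F'_sub|exact: F'_qf]|exact: F'_fr].
  + move=> i /andP[i0 iN].
    case: (eqVneq i m.+1) => [->|ne1].
      rewrite /= (ltn_eqF (ltnSn m)); split.
        move=> x Gx; exists 0, x; split => //; by rewrite scale0r add0r.
      by exists p.
    case: (eqVneq i m.+2) => [->|ne2].
      rewrite /= eqxx; split.
        move=> x [r [g [Gg ->]]]; apply: (subD S2); [exact: (subZ S2)|exact: G2].
      by exists q.
    have -> : (i.-1 == m.+1) = false.
      apply/negbTE; apply: contra ne2 => /eqP e.
      by rewrite -e prednK.
    by apply: Hchain; rewrite i0 iN.
- by exists p => -[H _]; apply: Hv; apply: H.
- exists p; split.
  + exact: F'p.
  + by move=> x [r [g [Gg ->]]]; exists r, g.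
  + move=> s Gs l.
    have [-> _] : s = 0 /\ (0 : ps) = 0 by apply: Hiv; rewrite scale0r addr0.
    by [].
  + by rewrite eigE.
- exists q; split.
  + exact: Hq.
  + move=> y Fy; have [r [t [g [Gg ->]]]] := Hiii Fy.
    exists t, (r *: p + g); split; first by exists r, g.
    by rewrite eaddE smulE addrCA addrA.
  + move=> s [r [g [Gg e]]] l.
    by rewrite (pq_indep_q Gg e).
  + rewrite eigE; have [r [g [Gg ->]]] := Hii.
    by exists r, g.
Qed.

End Assemble.

End EeM.
Import EeM.

Module MM.

Lemma crd_opp n (x : abE n) c : crd (- x) c = - crd x c.
Proof. by apply: funext => k; rewrite /crd /= /eopp ps_oppE mxE. Qed.

Lemma pC_add x y : pC (x + y) = pC x + pC y.
Proof. by apply: funext => -[|k]; rewrite ps_addE /pC ?addr0. Qed.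
Lemma pC_mul x y : pC (x * y) = pC x * pC y.
Proof. by apply: funext => -[|k]; rewrite pC_mulE /pC ?mulr0. Qed.
Lemma pC1 : pC 1 = 1.
Proof. by apply: funext => -[|k]. Qed.
Lemma pC0 : pC 0 = 0.
Proof. by apply: funext => -[|k]. Qed.

Ltac lin := apply: crd_ext => ?; rewrite ?(crd_add, crd_opp, crd_smul); ring.

Lemma congZ_refl x : congZ x x.
Proof. by exists 0; rewrite subrr. Qed.

Lemma intr_natC (k : nat) : ((k%:Z)%:~R : C) = k%:R.
Proof. by rewrite -pmulrn. Qed.

Section Main.
Variables (n : nat) (a : abE n -> abE n).
Hypothesis Hab : is_ab_structure a.
Variable F : nat -> abE n -> Prop.
Hypothesis HJH : is_JH a F.
Variable m : nat.
Hypothesis Hmn : (m.+1 < n)%N.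
Variables (e1 e2 : abE n) (l1 l2 : C).
Hypotheses (He1 : F m.+1 e1) (He2 : F m.+2 e2).
Hypothesis span1 : forall x, F m.+1 x -> exists s y, F m y /\ x = s *: e1 + y.
Hypothesis ind1 : forall s, F m (s *: e1) -> s = 0.
Hypothesis eig1 : F m (a e1 - (pC l1 * pX) *: e1).
Hypothesis span2 : forall x, F m.+2 x -> exists s y, F m.+1 y /\ x = s *: e2 + y.
Hypothesis ind2 : forall s, F m.+1 (s *: e2) -> s = 0.
Variables (Sr : ps) (g2 : abE n).
Hypothesis Hg2 : F m g2.
Hypothesis HS : a e2 - (pC l2 * pX) *: e2 = Sr *: e1 + g2.
Hypothesis Hd : forall k : nat, l1 - l2 - 1 + k%:R != 0.

Definition tau : ps := fun k => - Sr k / (l1 - l2 - 1 + k%:R).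
Definition beta : ps := fun k => tau k.+1.
Definition vv : abE n := e2 + beta *: e1.
Definition g1 : abE n := a e1 - (pC l1 * pX) *: e1.

Lemma SG : is_sub_ab a (F m).
Proof. by apply: (Hsub HJH); apply: leq_trans (ltnW Hmn). Qed.
Lemma S1 : is_sub_ab a (F m.+1).
Proof. by apply: (Hsub HJH); apply: ltnW. Qed.
Lemma S2 : is_sub_ab a (F m.+2).
Proof. exact: (Hsub HJH). Qed.
Lemma G1 x : F m x -> F m.+1 x.
Proof. by move=> Gx; apply: (Fincl (i := m.+1) HJH) => //=; rewrite ltnW. Qed.
Lemma F12 x : F m.+1 x -> F m.+2 x.
Proof. by move=> Gx; apply: (Fincl (i := m.+2) HJH) => //=. Qed.

Lemma key_ser :
  Sr + pC l1 * (pX * beta) + pX * bd beta - pC l2 * (pX * beta) = pC (Sr 0%N).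
Proof.
apply: funext => -[|k].
  by rewrite !ps_addE ps_oppE !pC_mulE !pX_mulE /pC /= !mulr0 addr0 subr0 addr0.
rewrite !ps_addE ps_oppE !pC_mulE !pX_mulE /pC /bd /beta /tau.
have := Hd k.+1; rewrite -addn1 natrD => D.
field; exact: D.
Qed.

Lemma ae1 : a e1 = (pC l1 * pX) *: e1 + g1.
Proof. by rewrite /g1 addrC subrK. Qed.
Lemma ae2 : a e2 = (pC l2 * pX) *: e2 + Sr *: e1 + g2.
Proof. by rewrite -addrA -HS addrC subrK. Qed.

Lemma av : a vv = (pC l2 * pX) *: vv + pC (Sr 0%N) *: e1 + (g2 + beta *: g1).
Proof.
rewrite /vv (aD Hab) (a_smul Hab) ae2 ae1 -key_ser.
lin.
Qed.

Lemma Gg : F m (g2 + beta *: g1).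
Proof. by apply: (subD SG) => //; apply: (subZ SG); exact: eig1. Qed.

Lemma Fv : F m.+2 vv.
Proof. by apply: (subD S2) => //; apply: (subZ S2); exact: F12. Qed.


Lemma caseA (H0 : Sr 0%N = 0) : exists F'j : abE n -> Prop,
  [/\ is_JH a (fun i => if i == m.+1 then F'j else F i),
      exists x, ~ (F'j x <-> F m.+1 x),
      quot_iso_E a (F m) F'j l2 &
      quot_iso_E a F'j (F m.+2) l1].
Proof.
have SG := SG; have S1 := S1; have S2 := S2.
apply: (assemble Hab HJH Hmn (p := vv) (q := e1)).
- exact: Fv.
- exact: F12.
- have -> : a vv - (pC l2 * pX) *: vv = g2 + beta *: g1.
    by rewrite av H0 pC0 scale0r addr0 addrC addKr.
  exact: Gg.
- exists 0, g1; split; first exact: eig1.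
  by rewrite scale0r add0r.
- move=> y Fy; have [s [y1 [F1y1 ->]]] := span2 Fy.
  have [t [g [Gg' ->]]] := span1 F1y1.
  exists s, (t - s * beta), g; split => //.
  rewrite /vv; lin.
- move=> r t H.
  have r0 : r = 0.
    apply: ind2.
    have -> : r *: e2 = (r *: vv + t *: e1) - (r * beta + t) *: e1 by rewrite /vv; lin.
    by apply: (subB S1); [exact: G1|exact: (subZ S1)].
  split => //; apply: ind1; move: H; by rewrite r0 scale0r add0r.
- move=> Fv1; apply: one_neq0_ps; apply: ind2.
  have -> : 1 *: e2 = vv - beta *: e1 by rewrite /vv scale1r addrK.
  by apply: (subB S1) => //; exact: (subZ S1).
Qed.

Definition t0 := tau 0%N.
Definition ww : abE n := pX *: vv + pC t0 *: e1.

Lemma pC_sub x y : pC (x - y) = pC x - pC y.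
Proof. by rewrite pC_add pCN. Qed.

Lemma caseB (H0 : Sr 0%N != 0) : exists F'j : abE n -> Prop,
  [/\ is_JH a (fun i => if i == m.+1 then F'j else F i),
      exists x, ~ (F'j x <-> F m.+1 x),
      quot_iso_E a (F m) F'j (l2 + 1) &
      quot_iso_E a F'j (F m.+2) (l1 - 1)].
Proof.
have SG := SG; have S1 := S1; have S2 := S2.
have D0 := Hd 0.
have ht0 : t0 != 0.
  by rewrite /t0 /tau mulf_neq0 ?oppr_eq0 ?invr_eq0.
have hS0 : pC (Sr 0%N) = - (pC t0 * (pC l1 - pC l2 - 1)).
  have -> : Sr 0%N = - (t0 * (l1 - l2 - 1)).
    rewrite /t0 /tau; field; rewrite addr0 in D0 *; exact: D0.
  by rewrite pCN pC_mul !pC_sub pC1.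
have hi : pC (t0^-1) * pC t0 = 1 by rewrite -pC_mul mulVf // pC1.
apply: (assemble Hab HJH Hmn (p := ww) (q := vv)).
- apply: (subD S2); apply: (subZ S2); [exact: Fv|exact: F12].
- exact: Fv.
- have -> : a ww - (pC (l2 + 1) * pX) *: ww = pX *: (g2 + beta *: g1) + pC t0 *: g1.
    rewrite /ww (aD Hab) (aX Hab) (aC Hab) av ae1 pC_add pC1 hS0; lin.
  apply: (subD SG); apply: (subZ SG); [exact: Gg|exact: eig1].
- exists (- (pC l1 - pC l2 - 1)), (g2 + beta *: g1); split; first exact: Gg.
  rewrite av hS0 /ww pC_sub pC1; lin.
- move=> y Fy; have [s [y1 [F1y1 ->]]] := span2 Fy.
  have [t [g [Gg' ->]]] := span1 F1y1.
  exists (pC (t0^-1) * (t - s * beta)), (s - pC (t0^-1) * (t - s * beta) * pX), g.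
  split => //.
  apply: etrans (_ : _ = (pC (t0^-1) * (t - s * beta)) *: ww
     + (s - pC (t0^-1) * (t - s * beta) * pX) *: vv + g
     + ((1 - pC (t0^-1) * pC t0) * (t - s * beta)) *: e1) _.
    rewrite /ww /vv; lin.
  by rewrite hi subrr mul0r scale0r addr0.
- move=> r t H.
  have hrt : r * pX + t = 0.
    apply: ind2.
    have -> : (r * pX + t) *: e2 =
      (r *: ww + t *: vv) - (r * pX * beta + r * pC t0 + t * beta) *: e1.
      by rewrite /ww /vv; lin.
    by apply: (subB S1); [exact: G1|exact: (subZ S1)].
  have ht : t = - (r * pX) by apply/eqP; rewrite -addr_eq0 addrC hrt.
  have hr0 : r * pC t0 = 0.
    apply: ind1.
    have -> : (r * pC t0) *: e1 = r *: ww + t *: vv by rewrite ht /ww /vv; lin.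
    exact: H.
  have r0 : r = 0.
    have : r * (pC (t0^-1) * pC t0) = pC (t0^-1) * (r * pC t0) by ring.
    by rewrite hi mulr1 hr0 mulr0.
  by split => //; rewrite ht r0 mul0r oppr0.
- move=> Fw.
  have : pX = 0.
    apply: ind2.
    have -> : pX *: e2 = ww - (pX * beta + pC t0) *: e1 by rewrite /ww /vv; lin.
    by apply: (subB S1) => //; exact: (subZ S1).
  move=> /(congr1 (fun f : ps => f 1%N)) /eqP.
  by rewrite /pX ps_zeroE oner_eq0.
Qed.

End Main.

End MM.
Import MM.


Theorem mainTheorem4 (n : nat) (a : abE n -> abE n)
  (Hab : is_ab_structure a) (Hreg : is_regular a)
  (F : nat -> abE n -> Prop) (lam : nat -> C)
  (HJH : is_JH a F)
  (Hq : forall i, (0 < i <= n)%N -> quot_iso_E a (F i.-1) (F i) (lam i))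
  (j : nat) (Hj : (0 < j)%N) (Hjn : (j < n)%N)
  (Hnc : ~ congZ (lam j.+1) (lam j)) :
  exists (F'j : abE n -> Prop) (lj lj1 : C),
    [/\ is_JH a (fun i => if i == j then F'j else F i),
        exists x, ~ (F'j x <-> F j x),
        quot_iso_E a (F j.-1) F'j lj,
        quot_iso_E a F'j (F j.+1) lj1 &
        congZ (lam j) lj1 /\ congZ (lam j.+1) lj].
Proof.
case: j Hj Hjn Hnc => [|m] // _ Hmn Hnc.
have S1 : is_sub_ab a (F m.+1) by apply: (Hsub HJH); exact: ltnW.
have [e1 [He1 sp1 in1 eg1]] : quot_iso_E a (F m) (F m.+1) (lam m.+1).
  by apply: (Hq m.+1); rewrite /= ltnW.
have [e2 [He2 sp2 in2 eg2]] : quot_iso_E a (F m.+1) (F m.+2) (lam m.+2).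
  by apply: (Hq m.+2); rewrite /=.
rewrite eigE in eg1; rewrite eigE in eg2.
have [Sr [g2 [Gg2 HS]]] := sp1 _ eg2.
have ind1 : forall s, F m (s *: e1) -> s = 0 by move=> s /in1 /ps0P.
have ind2 : forall s, F m.+1 (s *: e2) -> s = 0 by move=> s /in2 /ps0P.
have Hd : forall k : nat, lam m.+1 - lam m.+2 - 1 + k%:R != 0.
  move=> k; apply/eqP => D; apply: Hnc; exists (k%:Z - 1).
  rewrite intrB intr_natC.
  have : lam m.+2 - lam m.+1 - (k%:R - 1) = - (lam m.+1 - lam m.+2 - 1 + k%:R) by ring.
  by rewrite D oppr0 => /eqP; rewrite subr_eq0 => /eqP.
have [H0|H0] := eqVneq (Sr 0%N) 0.
- have [F'j [HJ Hx Hq1 Hq2]] :=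
    caseA Hab HJH Hmn He1 He2 sp1 ind1 eg1 sp2 ind2 Gg2 HS Hd H0.
  exists F'j, (lam m.+2), (lam m.+1); split => //.
  by split; apply: congZ_refl.
- have [F'j [HJ Hx Hq1 Hq2]] :=
    caseB Hab HJH Hmn He1 He2 sp1 ind1 eg1 sp2 ind2 Gg2 HS Hd H0.
  exists F'j, (lam m.+2 + 1), (lam m.+1 - 1); split => //.
  split.
    by exists 1; rewrite opprB addrC subrK.
  by exists (-1); rewrite opprD addrA subrr add0r.
Qed.
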